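(* The rolling sieve finds all primes up to a bound $n$ using $O(n\log\log n)$ arithmetic operations and $O(\sqrt{n}\log n)$ bits of space.
   Context: Model of computation: a RAM where, for input $n$, arithmetic operations on integers of $O(\log n)$ bits and other basic operations have unit cost, words have $O(\log n)$ bits, space is measured in bits, and the output list of primes is not counted against the space. The rolling sieve is the following algorithm. Its data structure is a circular array $T[0..\Delta-1]$ of stacks, each implemented as a linked list. Initialization with a starting value $\mathrm{start}$: set $r=\lfloor\sqrt{\mathrm{start}}\rfloor+1$, $s=r^2$, $\Delta=r+2$, all stacks empty; for each prime $p\le r-1$ push $p$ onto stack $T[(p-(\mathrm{start}\bmod p))\bmod p]$; set $\mathrm{pos}=0$, $m=\mathrm{start}$. The procedure next() does: set isPrime = true; while $T[\mathrm{pos}]$ is nonempty, pop $p$ from it, push $p$ onto $T[(\mathrm{pos}+p)\bmod\Delta]$, and set isPrime = false; then if $m=s$: if isPrime is true, push $r$ onto $T[(\mathrm{pos}+r)\bmod\Delta]$ and set isPrime = false; in any case set $r=r+1$, $s=r^2$; then set $m=m+1$, $\mathrm{pos}=(\mathrm{pos}+1)\bmod\Delta$, and if $\mathrm{pos}=0$ increase $\Delta$ by $2$ (appending two new empty stacks at the end of the array); return isPrime (which reports whether the old value of $m$ is prime). To find all primes up to $n$: output the primes up to $100$ directly, initialize with $\mathrm{start}=100$, and repeatedly call next(), outputting the current integer whenever next() returns true, until $n$ has been processed. *)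

(* Defs.v *)
From Stdlib Require Import PeanoNat.
From mathcomp Require Import all_boot.
Set Implicit Arguments. Unset Strict Implicit. Unset Printing Implicit Defensive.

(* Stacks are lists (head = top); T is the circular array of stacks.   *)

Record rs_state := RS {
  rs_T : seq (seq nat);
  rs_delta : nat;
  rs_pos : nat;
  rs_m : nat;
  rs_r : nat;
  rs_s : nat }.

Definition push (p i : nat) (T : seq (seq nat)) : seq (seq nat) :=
  set_nth [::] T i (p :: nth [::] T i).

Definition pop_stack (i : nat) (T : seq (seq nat)) : seq (seq nat) :=
  set_nth [::] T i (behead (nth [::] T i)).

Definition cost_iter := 5.   (* test nonempty, pop, add+mod, push, set flag *)
Definition cost_next := 12.  (* all other operations of one next() call *)

(* The while loop of next(): L is the current content of T[pos].
   If that index equals pos, the loop would pop the same p forever: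
   this non-termination is represented by None.  Otherwise the stack
   T[pos] is untouched by the push, so the loop proceeds with the rest
   of L. *)
Fixpoint sieve_loop (pos delta : nat) (L : seq nat) (T : seq (seq nat))
    : option (seq (seq nat) * nat) :=
  match L with
  | [::] => Some (T, 1)     (* final emptiness test *)
  | p :: L' =>
      let j := (pos + p) %% delta in
      if j == pos then None
      else match sieve_loop pos delta L' (push p j (pop_stack pos T)) with
           | Some (T', c) => Some (T', c + cost_iter)
           | None => None
           end
  end.

Definition next (st : rs_state) : option (bool * rs_state * nat) :=
  let pos := rs_pos st in
  let delta := rs_delta st in
  let L := nth [::] (rs_T st) pos in
  match sieve_loop pos delta L (rs_T st) with
  | None => None
  | Some (T1, c1) =>
      let isP1 := nilp L in
      let '(T2, isP2, r2, s2, c2) :=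
        if rs_m st == rs_s st then
          let T2 := if isP1 then push (rs_r st) ((pos + rs_r st) %% delta) T1
                    else T1 in
          (T2, false, (rs_r st).+1, ((rs_r st).+1) ^ 2, 6)
        else (T1, isP1, rs_r st, rs_s st, 1) in
      let pos' := (pos + 1) %% delta in
      let '(T3, delta3, c3) :=
        if pos' == 0 then (T2 ++ [:: [::]; [::]], delta + 2, 3)
        else (T2, delta, 1) in
      Some (isP2, RS T3 delta3 pos' (rs_m st).+1 r2 s2, c1 + c2 + c3 + cost_next)
  end.

Definition rs_init (start : nat) : rs_state :=
  let r := Nat.sqrt start + 1 in
  let delta := r + 2 in
  let T := foldl (fun T p => push p ((p - start %% p) %% p) T)
                 (nseq delta [::])
                 [seq p <- iota 0 r | prime p] in
  RS T delta 0 start r (r ^ 2).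

(* Operations spent by the initialization with start = 100 and by
   outputting the primes up to 100 directly (a constant). *)
Definition init_cost : nat :=
  let st := rs_init 100 in
  100 * 10 + rs_delta st + 10 * size [seq p <- iota 0 (rs_r st) | prime p] + 20.

(* Words have O(log n) bits: we take
   word_bits n = floor(log2 n) + 2 (enough for m, s, r, Delta, pos, p).
   The data structure uses Delta head pointers, two words (value and
   link) per stack entry, and a constant number of words for the
   scalar variables (pos, m, r, s, Delta, isPrime, loop temporaries). *)
Definition word_bits (n : nat) : nat := trunc_log 2 n + 2.

Definition rs_space (n : nat) (st : rs_state) : nat :=
  word_bits n * (rs_delta st + 2 * sumn (map size (rs_T st)) + 10).

Fixpoint rs_iter (n k : nat) (st : rs_state) (out : seq nat) (ops sp : nat)
    : option (seq nat * nat * nat) :=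
  match k with
  | 0 => Some (out, ops, sp)
  | k'.+1 =>
      match next st with
      | None => None
      | Some (b, st', c) =>
          rs_iter n k' st' (if b then rcons out (rs_m st) else out)
                  (ops + c) (maxn sp (rs_space n st'))
      end
  end.

(* Find all primes up to n: output the primes up to 100 directly,
   initialize with start = 100 and call next() for m = 100, ..., n.
   Result: (output list, number of operations, peak space in bits). *)
Definition rolling_sieve (n : nat) : option (seq nat * nat * nat) :=
  let direct := [seq p <- iota 0 (minn n 100).+1 | prime p] in
  if n < 100 then Some (direct, 100 * 10, word_bits n * 10)
  else let st := rs_init 100 in
       rs_iter n (n - 99) st direct init_cost (rs_space n st).

(* Main.v *)
Require Import Defs.
From Stdlib Require Import Reals Lra PeanoNat.
From mathcomp Require Import all_boot zify.
Set Implicit Arguments. Unset Strict Implicit. Unset Printing Implicit Defensive.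

Lemma prime_not_dvd_fact p y : prime p -> y < p -> ~~ (p %| y`!).
Proof.
move=> pp; elim: y => [|y IH] lt; first by rewrite fact0 Euclid_dvd1.
rewrite factS Euclid_dvdM // negb_or IH ?andbT; last by lia.
apply/negP => /dvdn_leq; lia.
Qed.

Lemma prime_dvd_binom y p : prime p -> y < p -> p <= 2 * y -> p %| 'C(2 * y, y).
Proof.
move=> pp lt le.
have h : p %| (2 * y)`! by apply: dvdn_fact; have := prime_gt0 pp; lia.
rewrite -(bin_fact (_ : y <= 2 * y)) ?leq_pmull // in h.
rewrite (_ : 2 * y - y = y) in h; last by lia.
move: h; rewrite !Euclid_dvdM // (negbTE (prime_not_dvd_fact pp lt)).
by rewrite !orbF.
Qed.

Lemma coprime_prod_primes p (s : seq nat) :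
  prime p -> all prime s -> p \notin s -> coprime p (\prod_(q <- s) q).
Proof.
move=> pp; elim: s => [|q s IH] /=; first by rewrite big_nil coprimen1.
move=> /andP [pq aps]; rewrite in_cons negb_or => /andP [npq nps].
rewrite big_cons coprimeMr IH // andbT prime_coprime // dvdn_prime2 //.
Qed.

Lemma prod_dvd (s : seq nat) N : uniq s -> all prime s ->
  (forall p, p \in s -> p %| N) -> \prod_(p <- s) p %| N.
Proof.
elim: s => [|p s IH] /=; first by rewrite big_nil dvd1n.
move=> /andP [nps us] /andP [pp aps] hd.
rewrite big_cons Gauss_dvd; last exact: coprime_prod_primes.
rewrite hd ?mem_head //=; apply: IH => // q qs; by apply: hd; rewrite in_cons qs orbT.
Qed.

Lemma prod_ge y (s : seq nat) : (forall p, p \in s -> y <= p) ->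
  y ^ size s <= \prod_(p <- s) p.
Proof.
elim: s => [|p s IH] /= h; first by rewrite big_nil.
rewrite big_cons expnS leq_mul ?h ?mem_head // IH // => q qs.
by apply: h; rewrite in_cons qs orbT.
Qed.

Lemma binom_le n m : 'C(n, m) <= 2 ^ n.
Proof.
elim: n m => [|n IH] [|m] //=; first by rewrite bin0 expn_gt0.
rewrite binS expnS mul2n -addnn leq_add //.
Qed.

Lemma cheb k : k * count prime (iota (2 ^ k).+1 (2 ^ k)) <= 2 ^ k.+1.
Proof.
set y := 2 ^ k.
set s := filter prime (iota y.+1 y).
have hs : count prime (iota y.+1 y) = size s by rewrite size_filter.
have h1 : y ^ size s <= \prod_(p <- s) p.
  apply: prod_ge => p; rewrite mem_filter mem_iota => /andP [_ /andP [a _]].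
  by apply: ltnW.
have h2 : \prod_(p <- s) p <= 'C(2 * y, y).
  apply: dvdn_leq; first by rewrite bin_gt0 leq_pmull.
  apply: prod_dvd; first by rewrite filter_uniq // iota_uniq.
    by apply/allP => p; rewrite mem_filter => /andP [].
  move=> p; rewrite mem_filter mem_iota => /andP [pp /andP [a b]].
  apply: prime_dvd_binom => //; lia.
have h3 := binom_le (2 * y) y.
have : 2 ^ (k * size s) <= 2 ^ (2 * y).
  by rewrite expnM (leq_trans h1) // (leq_trans h2).
rewrite leq_exp2l // hs expnS /y => ->.
done.
Qed.

Lemma block k n : 0 < k ->
  k * (\sum_((2 ^ k).+1 <= p < (2 * 2 ^ k).+1 | prime p) n %/ p) <= 2 * n.
Proof.
move=> k0.
have e : \sum_((2 ^ k).+1 <= p < (2 * 2 ^ k).+1 | prime p) n %/ p <=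
         count prime (iota (2 ^ k).+1 (2 ^ k)) * (n %/ 2 ^ k).
  apply: (@leq_trans (\sum_((2 ^ k).+1 <= p < (2 * 2 ^ k).+1 | prime p) (n %/ 2 ^ k))).
    rewrite big_nat_cond [X in _ <= X]big_nat_cond; apply: leq_sum => p /andP [/andP [a _] _].
    apply: leq_div2l; [by rewrite expn_gt0 | exact: ltnW].
  rewrite -sum1_count big_distrl /= /index_iota.
  have -> : (2 * 2 ^ k).+1 - (2 ^ k).+1 = 2 ^ k by lia.
  by apply: eq_leq; apply: eq_bigr => *; rewrite mul1n.
apply: (leq_trans (leq_mul (leqnn k) e)).
rewrite mulnA (leq_trans (leq_mul (cheb k) (leqnn _))) //.
rewrite expnS -mulnA leq_mul2l /=.
by rewrite mulnC -leq_divRL ?expn_gt0.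
Qed.

Lemma harm (b : nat -> nat) N J : (forall k, 0 < k -> k * b k <= N) ->
  \sum_(1 <= k < 2 ^ J) b k <= J * N.
Proof.
move=> hb; elim: J => [|J IH]; first by rewrite expn0 big_geq.
rewrite (@big_cat_nat _ _ _ (2 ^ J)) //=; last 2 first.
- by rewrite expn_gt0.
- by rewrite leq_pexp2l.
rewrite mulSn addnC leq_add //.
apply: (@leq_trans (\sum_(2 ^ J <= k < 2 ^ J.+1) (N %/ 2 ^ J))).
  rewrite big_nat_cond [X in _ <= X]big_nat_cond; apply: leq_sum => k /andP [/andP [a _] _].
  have k0 : 0 < k by apply: leq_trans a; rewrite expn_gt0.
  apply: (@leq_trans (N %/ k)); first by rewrite leq_divRL // mulnC hb.
  by apply: leq_div2l; rewrite ?expn_gt0.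
rewrite sum_nat_const_nat expnS.
have -> : 2 * 2 ^ J - 2 ^ J = 2 ^ J by lia.
by rewrite mulnC -leq_divRL ?expn_gt0.
Qed.

Lemma dyadic_split (f : nat -> nat) K :
  \sum_(2 <= p < (2 ^ K).+1 | prime p) f p =
  \sum_(k < K) \sum_((2 ^ k).+1 <= p < (2 * 2 ^ k).+1 | prime p) f p.
Proof.
elim: K => [|K IH]; first by rewrite big_ord0 expn0 big_geq.
rewrite big_ord_recr /= -IH.
rewrite (@big_cat_nat _ _ _ (2 ^ K).+1) //=; last first.
  by rewrite ltnS expnS leq_pmull.
  by rewrite ltnS expn_gt0.
by rewrite expnS.
Qed.

Lemma sum_ext (P : pred nat) (F : nat -> nat) a m p : a <= m -> m <= p ->
  \sum_(a <= i < m | P i) F i <= \sum_(a <= i < p | P i) F i.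
Proof. by move=> am mp; rewrite (big_cat_nat am mp) /= leq_addr. Qed.

Lemma S_bound n R : 2 <= R ->
  \sum_(0 <= p < R | prime p) n %/ p <=
  n + 2 * n * (trunc_log 2 (trunc_log 2 R) + 2).
Proof.
move=> R2.
set t := trunc_log 2 R.
have t1 : 0 < t by rewrite /t trunc_log_gt0.
have RK : R <= (2 ^ t.+1).+1 by apply: ltnW; rewrite ltnS ltnW // trunc_log_ltn.
apply: (leq_trans (sum_ext _ _ (leq0n _) RK)).
rewrite (@big_cat_nat _ _ _ 2) //=; last by rewrite ltnS expn_gt0.
rewrite [X in X + _]big_mkcond big_nat_recl // big_nat_recl // big_geq //= add0n.
rewrite dyadic_split big_ord_recl /=.
set J := (trunc_log 2 t.+1).+1.
have KJ : t.+1 <= 2 ^ J by apply: ltnW; rewrite trunc_log_ltn.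
have hJ : J <= trunc_log 2 t + 2.
  have : trunc_log 2 t.+1 <= trunc_log 2 t.*2 by apply: leq_trunc_log; lia.
  rewrite trunc_log2_double //; rewrite /J; lia.
rewrite !add0n; apply: leq_add.
  rewrite expn0 muln1 big_mkcond /=.
  rewrite big_nat1 /=.
  exact: leq_div.
have e : \sum_(i < t) \sum_((2 ^ bump 0 i).+1 <= p < (2 * 2 ^ bump 0 i).+1 | prime p) n %/ p
   = \sum_(1 <= k < t.+1) \sum_((2 ^ k).+1 <= p < (2 * 2 ^ k).+1 | prime p) n %/ p.
  by rewrite big_add1 /= big_mkord; apply: eq_bigr => i _; rewrite /bump.
rewrite e.
apply: (leq_trans (sum_ext _ _ (isT : 1 <= t.+1) KJ)).
have H := @harm (fun k => \sum_((2 ^ k).+1 <= p < (2 * 2 ^ k).+1 | prime p) n %/ p) (2 * n) J (fun k k0 => block n k0).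
apply: (leq_trans H).
by rewrite mulnC leq_mul2l hJ orbT.
Qed.

Definition off (x m : nat) := (x - m %% x) %% x.

Lemma off_lt x m : 0 < x -> off x m < x.
Proof. by move=> x0; rewrite /off ltn_pmod. Qed.

Lemma off0 x m : 0 < x -> (off x m == 0) = (x %| m).
Proof.
move=> x0; rewrite /off /dvdn.
have := ltn_pmod m x0; set a := m %% x => ax.
case: (posnP a) => [->|a0]; first by rewrite subn0 modnn eqxx.
rewrite modn_small; last by lia.
apply/eqP/eqP; lia.
Qed.

Lemma offS x m : 1 < x -> off x m.+1 = if x %| m then x.-1 else (off x m).-1.
Proof.
move=> x1; have x0 : 0 < x by lia.
rewrite /off /dvdn.
have e : m.+1 %% x = (m %% x).+1 %% x by rewrite -addn1 -modnDml addn1.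
rewrite e.
have := ltn_pmod m x0; set a := m %% x => ax.
case: (posnP a) => [->|a0].
  by rewrite (modn_small x1) modn_small; lia.
rewrite (@modn_small (x - a)); last by lia.
case: (ltngtP a.+1 x) => h.
- by rewrite (modn_small h) modn_small; lia.
- lia.
- by rewrite h modnn subn0 modnn; lia.
Qed.

Lemma mod_small2 a d : d <= a -> a < 2 * d -> a %% d = a - d.
Proof.
move=> h1 h2; rewrite -{1}(subnK h1) modnDr modn_small //; lia.
Qed.

Lemma new_idx pos delta x m : pos < delta -> 1 < x -> x < delta ->
  let pos' := (pos + 1) %% delta in
  let delta' := if pos' == 0 then delta + 2 else delta in
  (pos' + off x m.+1) %% delta' =
  if x %| m then (pos + x) %% delta else (pos + off x m) %% delta.
Proof.
move=> pd x1 xd /=.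
have x0 : 0 < x by lia.
have ho := off_lt m x0.
have h0 := off0 m x0.
rewrite offS //.
case: (ltngtP (pos + 1) delta) => hp.
- rewrite (modn_small hp) addn1 /=.
  case: ifP => hd.
    congr (_ %% _); lia.
  have : off x m != 0 by rewrite h0 hd.
  move=> hne; congr (_ %% _); lia.
- lia.
- rewrite hp modnn eqxx add0n.
  case: ifP => hd.
    rewrite modn_small; last by lia.
    rewrite mod_small2; lia.
  have : off x m != 0 by rewrite h0 hd.
  move=> hne; rewrite modn_small; last by lia.
  rewrite mod_small2; lia.
Qed.

Lemma count_push x p j T i : count_mem x (nth [::] (push p j T) i) =
  (if i == j then (p == x) + count_mem x (nth [::] T i) else count_mem x (nth [::] T i)).
Proof. by rewrite /push nth_set_nth /=; case: eqP => // ->. Qed.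

Lemma nth_push_ne p j T i : i != j -> nth [::] (push p j T) i = nth [::] T i.
Proof. by rewrite /push nth_set_nth /= => /negbTE ->. Qed.

Lemma nth_pop T i pos : nth [::] (pop_stack pos T) i =
  if i == pos then behead (nth [::] T pos) else nth [::] T i.
Proof. by rewrite /pop_stack nth_set_nth /=; case: eqP => // ->. Qed.

Lemma size_push p j T : j < size T -> size (push p j T) = size T.
Proof. by move=> h; rewrite /push size_set_nth; apply/maxn_idPr. Qed.

Lemma size_pop pos T : pos < size T -> size (pop_stack pos T) = size T.
Proof. by move=> h; rewrite /pop_stack size_set_nth; apply/maxn_idPr. Qed.

Lemma mod_ne pos p delta : pos < delta -> 0 < p < delta -> (pos + p) %% delta != pos.
Proof.
move=> h1 /andP [h2 h3].
case: (ltnP (pos + p) delta) => h.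
  rewrite modn_small //; lia.
rewrite mod_small2 //; lia.
Qed.

Lemma loop_spec pos delta L T : pos < size T -> size T = delta ->
  nth [::] T pos = L -> (forall p, p \in L -> 0 < p < delta) ->
  exists T', [/\ sieve_loop pos delta L T = Some (T', 1 + 5 * size L),
    size T' = size T, nth [::] T' pos = [::] &
    forall i x, i != pos -> count_mem x (nth [::] T' i) =
      count_mem x (nth [::] T i) + count_mem x L * ((pos + x) %% delta == i)].
Proof.
elim: L T => [|p L IH] T hpos hsz hL hp /=.
  exists T; split => // i x _; by rewrite mul0n addn0.
have pd : 0 < p < delta by apply: hp; rewrite mem_head.
have hne := mod_ne (_ : pos < delta) pd.
rewrite (negbTE (hne _)); last by rewrite -hsz.
set j := (pos + p) %% delta.
have jd : j < size T by rewrite hsz /j ltn_mod; lia.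
set T1 := push p j (pop_stack pos T).
have s1 : size T1 = size T by rewrite /T1 size_push size_pop // size_pop.
have n1 : nth [::] T1 pos = L.
  rewrite /T1 nth_push_ne; last by rewrite eq_sym hne // -hsz.
  by rewrite nth_pop eqxx hL.
have [||||T' [-> s' n' c']] := IH T1; rewrite ?s1 //.
  by move=> q qL; apply: hp; rewrite in_cons qL orbT.
exists T'; split => //.
- by congr (Some (_, _)); rewrite /cost_iter /=; lia.
- by rewrite s' s1.
move=> i x ine; rewrite c' // /T1 count_push nth_pop (negbTE ine) /=.
case: (p =P x) => [px|px]; last by case: ifP; rewrite /= add0n.
subst x.
case: (eqVneq i j) => [ij|ij]; case: (eqVneq ((pos + p) %% delta) i) => [e|e] /=; rewrite ?muln1 ?muln0; try lia.

Qed.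

Lemma next_eq T delta pos m r s T1 c1 :
  sieve_loop pos delta (nth [::] T pos) T = Some (T1, c1) ->
  let L := nth [::] T pos in
  let sq := m == s in
  let T2 := if sq && nilp L then push r ((pos + r) %% delta) T1 else T1 in
  let r2 := if sq then r.+1 else r in
  let s2 := if sq then r.+1 ^ 2 else s in
  let pos' := (pos + 1) %% delta in
  let wrap := pos' == 0 in
  Defs.next (RS T delta pos m r s) =
  Some (~~ sq && nilp L,
        RS (if wrap then T2 ++ [:: [::]; [::]] else T2)
           (if wrap then delta + 2 else delta) pos' m.+1 r2 s2,
        c1 + (if sq then 6 else 1) + (if wrap then 3 else 1) + cost_next).
Proof.
move=> h /=; rewrite /Defs.next /= h.
case: (m == s); case: (nilp _); case: ((pos + 1) %% delta == 0); by [].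
Qed.

Lemma not_prime_sq r : 1 < r -> prime (r * r) = false.
Proof.
move=> r1; apply/negP => pp.
have := Euclid_dvdM r r pp; rewrite dvdnn orbb => /esym /dvdn_leq.
have -> : 0 < r by lia.
move=> /(_ isT); nia.
Qed.

Lemma has_sq r : 1 < r ->
  (~~ has (fun x => prime x && (x %| r * r)) (iota 0 r)) = prime r.
Proof.
move=> r1; apply/idP/idP.
  move=> /hasPn h; apply/negPn/negP => npr.
  have pp := pdiv_prime r1.
  have hl : pdiv r < r.
    rewrite ltn_neqAle pdiv_leq; last by lia.
    by rewrite andbT; apply/eqP => e; rewrite -e pp in npr.
  have := h (pdiv r); rewrite mem_iota add0n hl /= pp /= dvdn_mulr ?pdiv_dvd //.
  by move=> /(_ isT).
move=> pr; apply/hasPn => x; rewrite mem_iota add0n /= => xr.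
apply/negP => /andP [px]; rewrite Euclid_dvdM // orbb dvdn_prime2 // => /eqP e.
lia.
Qed.

Lemma has_m r m : 2 < r -> (r.-1) * (r.-1) <= m -> m < r * r ->
  (~~ has (fun x => prime x && (x %| m)) (iota 0 r)) = prime m.
Proof.
move=> r2 h1 h2; apply/idP/idP.
  move=> /hasPn h; apply: ltn_pdiv2_prime; first by nia.
  rewrite ltnNge; apply/negP => le.
  have m1 : 1 < m by nia.
  have pp := pdiv_prime m1.
  have hl : pdiv m < r.
    rewrite ltnNge; apply/negP => rl.
    have : r * r <= pdiv m ^ 2 by rewrite expnS expn1 leq_mul.
    lia.
  by have := h (pdiv m); rewrite mem_iota add0n hl /= pp pdiv_dvd => /(_ isT).
move=> pm; apply/hasPn => x; rewrite mem_iota add0n /= => xr.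
apply/negP => /andP [px]; rewrite dvdn_prime2 // => /eqP e.
nia.
Qed.

Definition idx (st : rs_state) x := (rs_pos st + off x (rs_m st)) %% rs_delta st.

Record Inv (st : rs_state) : Prop := MkInv {
  inv_size : size (rs_T st) = rs_delta st;
  inv_j : exists j, rs_delta st = 13 + 2 * j /\ rs_m st = 100 + j * j + 12 * j + rs_pos st;
  inv_pos : rs_pos st < rs_delta st;
  inv_s : rs_s st = rs_r st ^ 2;
  inv_r1 : (rs_r st).-1 * (rs_r st).-1 <= rs_m st;
  inv_r2 : rs_m st <= rs_r st * rs_r st;
  inv_r11 : 11 <= rs_r st;
  inv_cnt : forall i x, i < rs_delta st ->
    count_mem x (nth [::] (rs_T st) i) = (prime x && (x < rs_r st) && (idx st x == i)) }.

Lemma inv_rd st : Inv st -> rs_r st + 2 <= rs_delta st.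
Proof.
case=> _ [j [hd hm]] hp _ hr1 _ hr11 _.
have : rs_r st - 1 < j + 11.
  rewrite ltnNge; apply/negP => h.
  have : (j + 11) * (j + 11) <= (rs_r st).-1 * (rs_r st).-1.
    by apply: leq_mul; lia.
  nia.
lia.
Qed.

Lemma mem_count_pos (T : eqType) (x : T) s : (x \in s) = (0 < count_mem x s).
Proof. by rewrite -has_count has_pred1. Qed.

Lemma size_le_count (L : seq nat) (a : pred nat) r :
  (forall x, count_mem x L = a x && (x < r)) -> size L <= count a (iota 0 r).
Proof.
move=> h.
have u : uniq L.
  apply: count_mem_uniq => x; rewrite mem_count_pos h; by case: (a x && _).
rewrite -size_filter; apply: uniq_leq_size => // x.
rewrite mem_count_pos h mem_filter mem_iota add0n.
by case: (a x); case: (x < r).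
Qed.

Lemma next_spec st : Inv st -> exists st' c,
  Defs.next st = Some (prime (rs_m st), st', c) /\ Inv st' /\
  rs_m st' = (rs_m st).+1 /\
  c <= 22 + 5 * count (fun p => prime p && (p %| rs_m st)) (iota 0 (rs_r st)).
Proof.
case: st => T delta pos m r s I.
have rd := inv_rd I.
case: I => /= hsz [j [hd hm]] hp hs hr1 hr2 hr11 hc.
rewrite /= in rd.
set L := nth [::] T pos.
have ho x : prime x -> x < r -> ((pos + off x m) %% delta == pos) = (x %| m).
  move=> px xr; have x0 := prime_gt0 px.
  rewrite -(off0 m x0).
  case: (eqVneq (off x m) 0) => [->|o0]; first by rewrite addn0 modn_small // eqxx.
  apply/negbTE; apply: mod_ne => //.
  have := off_lt m x0; lia.
have hL x : count_mem x L = (prime x && (x %| m)) && (x < r).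
  rewrite /L hc //= /idx /=.
  case: (boolP (prime x)) => px //=; case: (ltnP x r) => xr /=; rewrite ?andbF //.
  by rewrite ho // andbT.
have Lp p : p \in L -> 0 < p < delta.
  rewrite mem_count_pos hL lt0b => /andP [/andP [pp _] pr].
  by rewrite prime_gt0 //=; lia.
have hps : pos < size T by rewrite hsz.
have [T1 [hl s1 n1 c1]] := loop_spec hps hsz erefl Lp.
rewrite (next_eq m r s hl).
have hnil : nilp L = ~~ has (fun x => prime x && (x %| m)) (iota 0 r).
  apply/idP/idP.
    move/nilP => L0; apply/hasPn => x; rewrite mem_iota add0n => /andP [_ xr].
    by apply/negP => hx; have := hL x; rewrite L0 /= hx xr.
  move=> /hasPn h; apply/nilP; case E: L => [|y L'] //.
  have := hL y; rewrite E /= eqxx /= => e.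
  have : (prime y && (y %| m)) && (y < r) by move: e; case: (_ && _).
  case/andP => hy yr; have := h y; rewrite mem_iota add0n yr hy.
  by move=> /(_ isT).
have hout : ~~ (m == s) && nilp L = prime m.
  case: eqP => [ems|nems] /=.
    by rewrite ems hs expnS expn1 not_prime_sq //; lia.
  rewrite hnil has_m //; first by lia.
  by move: hr2 nems; rewrite hs expnS expn1; lia.
rewrite hout.
eexists; eexists; split; first by reflexivity.
split; last split => //.
  fold L.
  set T2 := (if (m == s) && nilp L then push r ((pos + r) %% delta) T1 else T1).
  set r2 := (if m == s then r.+1 else r).
  have d0 : 0 < delta by lia.
  have rr2 : r <= r2 <= r.+1 by rewrite /r2; case: (m == s); lia.
  have s2 : size T2 = delta.
    rewrite /T2; case: ifP => _; last by rewrite s1.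
    rewrite size_push; first by rewrite s1.
    by rewrite s1 hsz ltn_mod.
  pose nidx x := if x %| m then (pos + x) %% delta else (pos + off x m) %% delta.
  have hA i x : i < delta -> count_mem x (nth [::] T1 i) = prime x && (x < r) && (nidx x == i).
    move=> id; case: (eqVneq i pos) => [->|ine].
      rewrite n1 /=; symmetry.
      case: (boolP (prime x)) => //= px; case: (ltnP x r) => //= xr.
      suff -> : (nidx x == pos) = false by [].
      apply/negbTE; rewrite /nidx; have x0 := prime_gt0 px.
      case: ifP => hdv.
        apply: mod_ne => //; lia.
      have : off x m != 0 by rewrite off0 // hdv.
      have := off_lt m x0; move=> h1 h2.
      apply: mod_ne => //; lia.
    rewrite c1 // -/L hL hc // /idx /=.
    case: (boolP (prime x)) => //= px; case: (ltnP x r) => //= xr; rewrite ?andbF ?mul0n ?addn0 //=.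
    rewrite /nidx; have x0 := prime_gt0 px.
    case: ifP => hdv /=.
      have -> : off x m = 0 by apply/eqP; rewrite off0.
      by rewrite addn0 modn_small // eq_sym (negbTE ine) add0n mul1n.
    by rewrite mul0n addn0.
  have hpr : (m == s) && nilp L -> prime r.
    move=> /andP [/eqP e]; rewrite hnil e hs expnS expn1 has_sq //; lia.
  have hB i x : i < delta -> count_mem x (nth [::] T2 i) = prime x && (x < r2) && (nidx x == i).
    move=> id; rewrite /T2 /r2.
    case: (boolP ((m == s) && nilp L)) => hsn.
      have pr := hpr hsn.
      move/andP: hsn => [es _]; rewrite es.
      have ems : m = r * r by move/eqP: es; rewrite hs expnS expn1.
      rewrite count_push hA //.
      have nr : nidx r = (pos + r) %% delta by rewrite /nidx ems dvdn_mulr.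
      case: (eqVneq x r) => [->|xr].
        rewrite ltnn andbF /= addn0 ltnSn pr /= nr eq_sym.
        by case: (_ == _).
      rewrite ltnS.
      have -> : (x <= r) = (x < r) by rewrite leq_eqVlt (negbTE xr).
      by case: ifP.
    rewrite hA //.
    case: (boolP (m == s)) => es //=.
    have npr : ~~ prime r.
      move: hsn; rewrite es /= hnil negbK.
      have ems : m = r * r by move/eqP: es; rewrite hs expnS expn1.
      by rewrite ems -has_sq ?negbK //; lia.
    case: (eqVneq x r) => [->|xr]; first by rewrite (negbTE npr).
    rewrite ltnS.
    have -> : (x <= r) = (x < r) by rewrite leq_eqVlt (negbTE xr).
    done.
  set pos' := (pos + 1) %% delta.
  set w := pos' == 0.
  have hC x : prime x -> x < r2 ->
      (pos' + off x m.+1) %% (if w then delta + 2 else delta) = nidx x.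
    move=> px xr; apply: new_idx => //; first by apply: prime_gt1.
    lia.
  have hD x : nidx x < delta.
    by rewrite /nidx; case: (x %| m); rewrite ltn_mod.
  have hsq : m == s -> m = r * r by move/eqP => ->; rewrite hs expnS expn1.
  have hnsq : m != s -> m < r * r.
    move=> h; rewrite ltn_neqAle hr2 andbT; apply: contra h => /eqP ->.
    by rewrite hs expnS expn1.
  constructor => /=.
  - by rewrite -/T2 -/w; case: ifP => _; rewrite ?size_cat s2.
  - rewrite -/w /w /pos'; case: (ltnP (pos + 1) delta) => h.
      rewrite (modn_small h) addn1 /=; exists j; lia.
    have e : pos + 1 = delta by lia.
    rewrite e modnn eqxx; exists j.+1; nia.
  - rewrite -/w /w /pos'; have := ltn_mod (pos + 1) delta; rewrite d0.
    case: ifP => _; lia.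
  - by rewrite -/r2 /r2; case: (m == s).
  - rewrite -/r2 /r2; case: (boolP (m == s)) => es /=.
      rewrite (hsq es); lia.
    lia.
  - rewrite -/r2 /r2; case: (boolP (m == s)) => es /=.
      rewrite (hsq es); nia.
    by have := hnsq es.
  - by rewrite -/r2; lia.
  move=> i x; rewrite -/T2 -/r2 -/w -/pos' => hi.
  rewrite /idx /= -/pos' -/w.
  have hT3 : nth [::] (if w then T2 ++ [:: [::]; [::]] else T2) i =
             if i < delta then nth [::] T2 i else [::].
    case: ifP => hw.
      rewrite nth_cat s2; case: (ltnP i delta) => // _.
      by case: (i - delta) => [|[|k]] //=; rewrite nth_nil.
    by move: hi; rewrite hw => ->.
  rewrite hT3; case: (ltnP i delta) => hid.
    rewrite hB //; case: (boolP (prime x)) => //= px; case: (ltnP x r2) => //= xr.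
    by rewrite hC.
  case: (boolP (prime x)) => //= px; case: (ltnP x r2) => //= xr.
  rewrite hC //; suff -> : (nidx x == i) = false by [].
  apply/negbTE; have := hD x; lia.
rewrite /cost_next.
have := size_le_count hL.
move=> hle; apply: (@leq_trans (22 + 5 * size L)); last by rewrite leq_add2l leq_mul2l hle orbT.
rewrite /L; case: (m == s); case: ((pos + 1) %% delta == 0) => /=; lia.
Qed.

Definition T0 : seq (seq nat) :=
  [:: [:: 5; 2]; [::]; [:: 3]; [::]; [::]; [:: 7]; [::]; [::]; [::];
      [::]; [::]; [::]; [::]].

Lemma init_eq : rs_init 100 = RS T0 13 0 100 11 121.
Proof. vm_compute; reflexivity. Qed.

Lemma Inv_init : Inv (rs_init 100).
Proof.
rewrite init_eq; constructor => //=.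
  by exists 0.
move=> i x hi.
case: (ltnP x 11) => hx.
  have H : all (fun i => all (fun x => count_mem x (nth [::] T0 i) ==
     (prime x && (x < 11) && ((0 + off x 100) %% 13 == i))) (iota 0 11)) (iota 0 13).
    vm_compute; reflexivity.
  move/allP: H => /(_ i); rewrite mem_iota add0n hi => /(_ isT) /allP /(_ x).
  by rewrite mem_iota add0n hx => /(_ isT) /eqP.
rewrite andbF /=; apply/count_memPn.
have hall : all (fun l => all (fun y => y < 11) l) T0 by [].
case: (ltnP i (size T0)) => hs; last by rewrite nth_default.
have := allP hall _ (mem_nth [::] hs) => /allP h.
by apply/negP => /h; lia.
Qed.

Lemma sqrt_facts n : Nat.sqrt n * Nat.sqrt n <= n < (Nat.sqrt n).+1 * (Nat.sqrt n).+1.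
Proof.
have [h1 h2] := Nat.sqrt_spec n (Nat.le_0_l _).
apply/andP; split; [apply/leP; exact h1 | apply/ltP; exact h2].
Qed.

Lemma sq_le_sqrt a n : a * a <= n -> a <= Nat.sqrt n.
Proof.
move=> h; have /andP [_ h2] := sqrt_facts n.
rewrite leqNgt; apply/negP => lt.
have : (Nat.sqrt n).+1 * (Nat.sqrt n).+1 <= a * a by apply: leq_mul.
lia.
Qed.

Lemma size_le_count2 (L : seq nat) (a : pred nat) r :
  (forall x, count_mem x L <= a x && (x < r)) -> size L <= count a (iota 0 r).
Proof.
move=> h.
have u : uniq L.
  apply: count_mem_uniq => x; rewrite mem_count_pos; have := h x.
  by case: (a x && _); case: (count_mem x L) => [|[|k]].
rewrite -size_filter; apply: uniq_leq_size => // x.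
rewrite mem_count_pos mem_filter mem_iota add0n => hc.
have := h x; case: (a x) => /=; case: (x < r) => //=; by rewrite leqNgt hc.
Qed.

Lemma sumn_le st : Inv st -> sumn (map size (rs_T st)) <= rs_r st.
Proof.
move=> I.
rewrite -size_flatten.
apply: (leq_trans (size_le_count2 (a := prime) (r := rs_r st) _)); last by rewrite -{2}(size_iota 0 (rs_r st)) count_size.
move=> x.
rewrite count_flatten -(mkseq_nth [::] (rs_T st)) /mkseq -map_comp.
rewrite (inv_size I).
have -> : [seq (count (pred1 x) \o nth [::] (rs_T st)) i | i <- iota 0 (rs_delta st)] =
          [seq ((prime x && (x < rs_r st)) && (idx st x == i) : nat) | i <- iota 0 (rs_delta st)].
  apply/eq_in_map => i; rewrite mem_iota add0n /= => hi.
  by rewrite (inv_cnt I).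
rewrite sumn_count.
case: (prime x && (x < rs_r st)) => /=.
  rewrite (@eq_count _ _ (pred1 (idx st x))); last by move=> i /=; rewrite eq_sym.
  by rewrite count_uniq_mem ?iota_uniq //; case: (_ \in _).
by rewrite count_pred0.
Qed.

Definition spb n := word_bits n * (4 * Nat.sqrt n + 27).
Definition cntm R m := count (fun p => prime p && (p %| m)) (iota 0 R).

Lemma r_le_sqrt st n : Inv st -> rs_m st <= n -> (rs_r st).-1 <= Nat.sqrt n.
Proof. by move=> I hm; apply: sq_le_sqrt; apply: leq_trans (inv_r1 I) hm. Qed.

Lemma space_le st n : Inv st -> rs_m st <= n.+1 -> rs_space n st <= spb n.
Proof.
move=> I hm; rewrite /rs_space /spb leq_mul2l; apply/orP; right.
have hs := sumn_le I.
have /andP [q1 q2] := sqrt_facts n.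
set q := Nat.sqrt n in q1 q2 *.
have [j [hd hmj]] := inv_j I.
have hj : j <= q by apply: sq_le_sqrt; lia.
have hr1 := inv_r1 I.
have hr : (rs_r st).-1 <= q.+1.
  rewrite leqNgt; apply/negP => h.
  have : q.+2 * q.+2 <= (rs_r st).-1 * (rs_r st).-1 by apply: leq_mul.
  nia.
lia.
Qed.

Lemma cnt_mono a r R : r <= R -> count a (iota 0 r) <= count a (iota 0 R).
Proof.
move=> h; rewrite -(subnKC h) iotaD count_cat leq_addr //.
Qed.

Lemma iter_spec n k : forall st out ops sp, Inv st -> rs_m st + k <= n.+1 ->
  exists out' ops' sp', rs_iter n k st out ops sp = Some (out', ops', sp') /\
   out' = out ++ [seq m <- iota (rs_m st) k | prime m] /\
   ops' <= ops + \sum_(m <- iota (rs_m st) k) (22 + 5 * cntm (Nat.sqrt n).+1 m) /\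
   sp' <= maxn sp (spb n).
Proof.
elim: k => [|k IH] st out ops sp I hk /=.
  exists out, ops, sp; split => //; split; first by rewrite cats0.
  by rewrite big_nil addn0 leq_maxl.
have [st' [c [hn [I' [hm' hc]]]]] := next_spec I.
rewrite hn.
have hk' : rs_m st' + k <= n.+1 by rewrite hm'; lia.
have [out' [ops' [sp' [-> [ho [hops hsp]]]]]] := IH st' (if prime (rs_m st) then rcons out (rs_m st) else out)
   (ops + c) (maxn sp (rs_space n st')) I' hk'.
exists out', ops', sp'; split => //; split.
  by rewrite ho hm'; case: (prime (rs_m st)) => //=; rewrite cat_rcons.
split.
  apply: (leq_trans hops); rewrite hm' big_cons addnA leq_add2r leq_add2l.
  apply: (leq_trans hc); rewrite leq_add2l leq_mul2l /=.
  apply: cnt_mono.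
  have := r_le_sqrt (n := n) I; lia.
apply: (leq_trans hsp).
have := space_le I' (_ : rs_m st' <= n.+1); rewrite hm'.
move=> /(_ ltac:(lia)) h.
rewrite geq_max leq_maxr andbT geq_max leq_maxl /=.
by rewrite (leq_trans h) ?leq_maxr.
Qed.

Lemma count_mult p N : 0 < p -> \sum_(1 <= m < N.+1) (p %| m : nat) = N %/ p.
Proof.
move=> p0; elim: N => [|N IH]; first by rewrite big_geq // div0n.
by rewrite big_nat_recr //= IH divnS // addnC.
Qed.

Lemma cntm_sum R m : cntm R m = \sum_(0 <= p < R | prime p) (p %| m : nat).
Proof.
rewrite /cntm -sum1_count big_mkcondr /= /index_iota subn0.
by apply: eq_bigr => p _; case: (p %| m).
Qed.

Lemma sum_cnt R a k : 0 < a ->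
  \sum_(m <- iota a k) cntm R m <= \sum_(0 <= p < R | prime p) (a + k).-1 %/ p.
Proof.
move=> a0.
have e : iota a k = index_iota a (a + k) by rewrite /index_iota addKn.
rewrite e.
rewrite (eq_bigr (fun m => \sum_(0 <= p < R | prime p) (p %| m : nat))); last by move=> m _; rewrite cntm_sum.
rewrite exchange_big_nat /=.
rewrite big_nat_cond [X in _ <= X]big_nat_cond; apply: leq_sum => p /andP [_ pp].
rewrite -count_mult ?prime_gt0 //.
case: k e => [|k] e; first by rewrite big_geq ?addn0.
have -> : (a + k.+1).-1.+1 = a + k.+1 by lia.
by apply: (leq_trans _ (eq_leq _)); [| rewrite (big_cat_nat (n := a)) //=; last lia]; rewrite leq_addl.
Qed.

Lemma main_nat n : 100 <= n ->
  exists out ops sp, rolling_sieve n = Some (out, ops, sp) /\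
    out = [seq p <- iota 0 n.+1 | prime p] /\
    ops <= 1073 + 47 * n + 10 * n * trunc_log 2 (trunc_log 2 n) /\
    sp <= (trunc_log 2 n + 2) * (4 * Nat.sqrt n + 27).
Proof.
move=> n100.
rewrite /rolling_sieve ltnNge n100 /=.
have hm : rs_m (rs_init 100) = 100 by rewrite init_eq.
have hk : rs_m (rs_init 100) + (n - 99) <= n.+1 by rewrite hm; lia.
have [out [ops [sp [-> [ho [hops hsp]]]]]] := iter_spec
   [seq p <- iota 0 (minn n 100).+1 | prime p] init_cost (rs_space n (rs_init 100)) Inv_init hk.
exists out, ops, sp; split => //; split.
  rewrite ho hm.
  have -> : minn n 100 = 100 by apply/minn_idPr.
  have -> : [seq p <- iota 0 101 | prime p] = [seq p <- iota 1 99 | prime p].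
    by vm_compute.
  rewrite -filter_cat -iotaD; congr (filter _ (iota _ _)); lia.
have /andP [q1 q2] := sqrt_facts n.
set q := Nat.sqrt n in q1 q2 hops *.
have q10 : 10 <= q by apply: sq_le_sqrt; lia.
split.
  apply: (leq_trans hops); rewrite hm.
  rewrite big_split /= big_const_seq count_predT size_iota iter_addn_0 -big_distrr /=.
  have h1 := sum_cnt q.+1 (n - 99) (isT : 0 < 100).
  rewrite (_ : (100 + (n - 99)).-1 = n) in h1; last by lia.
  have qq2 : 2 <= q.+1 by lia.
  have h2 := S_bound n qq2.
  have h3 : trunc_log 2 (trunc_log 2 q.+1) <= trunc_log 2 (trunc_log 2 n).
    by apply: leq_trunc_log; apply: leq_trunc_log; nia.
  have -> : init_cost = 1073 by vm_compute.
  set L1 := trunc_log 2 (trunc_log 2 q.+1) in h2 h3.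
  set L2 := trunc_log 2 (trunc_log 2 n) in h3 *.
  have h4 : 5 * (n + 2 * n * (L1 + 2)) <= 25 * n + 10 * n * L2 by nia.
  have := leq_trans h1 h2; nia.
apply: (leq_trans hsp); rewrite geq_max leqnn /=.
rewrite init_eq /rs_space /spb /word_bits /= andbT leq_mul2l; apply/orP; right; lia.
Qed.

Lemma INR_leq a b : a <= b -> Rle (INR a) (INR b).
Proof. by move=> h; apply: le_INR; apply/leP. Qed.

Lemma ln_le' x y : Rlt 0 x -> Rle x y -> Rle (ln x) (ln y).
Proof.
move=> x0 [h|->]; last by apply: Rle_refl.
by apply: Rlt_le; apply: ln_increasing.
Qed.

Lemma INR_pos a : 0 < a -> Rlt 0 (INR a).
Proof. by move=> h; apply: lt_0_INR; apply/ltP. Qed.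

Lemma INR_expn a k : INR (a ^ k) = pow (INR a) k.
Proof.
elim: k => [|k IH]; first by rewrite expn0.
by rewrite expnS mult_INR IH.
Qed.

Lemma tlog_ln a : 0 < a -> Rle (Rmult (INR (trunc_log 2 a)) (ln 2)) (ln (INR a)).
Proof.
move=> a0.
have h := trunc_logP (isT : 1 < 2) a0.
rewrite -ln_pow; last by lra.
apply: ln_le'; first by apply: pow_lt; lra.
have := INR_leq h; rewrite INR_expn /=.
move=> H; apply: Rle_trans H; apply: Req_le; congr pow; lra.
Qed.

Lemma sqrt_INR n : Rle (INR (Nat.sqrt n)) (sqrt (INR n)).
Proof.
have /andP [h _] := sqrt_facts n.
rewrite -(sqrt_square (INR (Nat.sqrt n))); last by apply: pos_INR.
apply: sqrt_le_1_alt; rewrite -mult_INR; exact: INR_leq.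
Qed.

Lemma INR_lit (k : nat) : INR k = IZR (Z.of_nat k).
Proof. exact: INR_IZR_INZ. Qed.

Theorem theorem2 :
  exists (C : R) (N0 : nat), forall n : nat, (N0 <= n)%N ->
    exists (out : seq nat) (ops sp : nat),
      rolling_sieve n = Some (out, ops, sp) /\
      out = [seq p <- iota 0 n.+1 | prime p] /\
      Rle (INR ops) (Rmult (Rmult C (INR n)) (ln (ln (INR n)))) /\
      Rle (INR sp) (Rmult (Rmult C (sqrt (INR n))) (ln (INR n))).
Proof.
exists (IZR 100), (2 ^ 16) => n hn.
have n100 : 100 <= n by apply: leq_trans hn.
have [out [ops [sp [H1 [H2 [H3 H4]]]]]] := main_nat n100.
exists out, ops, sp; split => //; split => //.
set t := trunc_log 2 n in H3 H4.
set u := trunc_log 2 t in H3.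
set s := Nat.sqrt n in H4.
have n0 : 0 < n by lia.
have t16 : 16 <= t by apply: trunc_log_max.
have t0 : 0 < t by lia.
have s1 : 1 <= s by apply: sq_le_sqrt; lia.
have Rn : Rle (IZR 65536) (INR n).
  by have := INR_leq hn; rewrite INR_lit.
have Rt : Rle (IZR 16) (INR t) by have := INR_leq t16; rewrite INR_lit.
have Rs : Rle 1 (INR s) by have := INR_leq s1.
have hl2 := ln_lt_2.
have ht := tlog_ln n0; rewrite -/t in ht.
have hu := tlog_ln t0; rewrite -/u in hu.
have Rn0 : Rlt 0 (INR n) by lra.
have lnn8 : Rle 8 (ln (INR n)) by nra.
have tle : Rle (INR t) (Rmult 2 (ln (INR n))) by nra.
have lnt : Rle (ln (INR t)) (Rplus (ln 2) (ln (ln (INR n)))).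
  rewrite -ln_mult; [| lra | lra].
  apply: ln_le'; lra.
have ll1 : Rle 1 (ln (ln (INR n))).
  rewrite -(ln_exp 1); apply: ln_le'; first by apply: exp_pos.
  have := exp_le_3; lra.
have uLL : Rle (INR u) (Rplus 1 (Rmult 2 (ln (ln (INR n))))) by nra.
have Rsq : Rle (INR s) (sqrt (INR n)) by apply: sqrt_INR.
split.
  have e1 : INR 1073 = IZR 1073 by rewrite INR_lit.
  have e2 : INR 47 = IZR 47 by rewrite INR_lit.
  have e3 : INR 10 = IZR 10 by rewrite INR_lit.
  have := INR_leq H3; rewrite plus_INR plus_INR (mult_INR 47 n) (mult_INR (10 * n) u) (mult_INR 10 n) e1 e2 e3.
  move=> h; apply: (Rle_trans _ _ _ h).
  set LL := ln (ln (INR n)) in ll1 uLL *.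
  have : Rle (Rmult (INR n) (INR u)) (Rmult (INR n) (Rplus 1 (Rmult 2 LL))).
    by apply: Rmult_le_compat_l; lra.
  have : Rle (INR n) (Rmult (INR n) LL).
    by rewrite -{1}(Rmult_1_r (INR n)); apply: Rmult_le_compat_l; lra.
  nra.
have e1 : INR 2 = IZR 2 by rewrite INR_lit.
have e2 : INR 4 = IZR 4 by rewrite INR_lit.
have e3 : INR 27 = IZR 27 by rewrite INR_lit.
have := INR_leq H4; rewrite (mult_INR (t + 2)) (plus_INR t 2) (plus_INR (4 * s) 27) (mult_INR 4 s) e1 e2 e3.
move=> h; apply: (Rle_trans _ _ _ h).
have sq1 : Rle 1 (sqrt (INR n)) by lra.
have a1 : Rle (Rplus (INR t) (IZR 2)) (Rmult 3 (ln (INR n))) by lra.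
have a2 : Rle (Rplus (Rmult (IZR 4) (INR s)) (IZR 27)) (Rmult 31 (sqrt (INR n))) by lra.
have := Rmult_le_compat _ _ _ _ (ltac:(lra) : Rle 0 (Rplus (INR t) (IZR 2)))
   (ltac:(lra) : Rle 0 (Rplus (Rmult (IZR 4) (INR s)) (IZR 27))) a1 a2.
nra.
Qed.
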